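(* Let $(A,B)$ be a regular pair with $A,B\in\mathbb{C}^{n\times n}$, and let $C,D\in\mathbb{C}^{n\times n}$ be such that $[C,D]\in\mathbb{C}^{n\times2n}$ has full row rank and $CA+DB=0$. Then the pair $(D,C)$ is regular.
   Context: A pair $(A,B)$ of square matrices is regular if $\det(A-\lambda B)\neq0$ for some $\lambda\in\mathbb{C}$. *)

(* Defs.v *)
From HB Require Import structures.
From mathcomp Require Import all_boot all_order all_algebra.
From mathcomp Require Import complex.
From mathcomp Require Import reals.
Set Implicit Arguments. Unset Strict Implicit. Unset Printing Implicit Defensive.
Import GRing.Theory Num.Theory.
Local Open Scope ring_scope.

Definition regular_pair (F : comNzRingType) (n : nat) (A B : 'M[F]_n) : Prop :=
  exists lambda : F, \det (A - lambda *: B) != 0.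

(* Main.v *)
Require Import Defs.
From HB Require Import structures.
From mathcomp Require Import all_boot all_order all_algebra.
From mathcomp Require Import complex.
From mathcomp Require Import reals.
Import GRing.Theory Num.Theory.
Local Open Scope ring_scope.
Local Open Scope complex_scope.

Theorem lemma3p4 (R : realType) (n : nat) (A B C D : 'M[R[i]]_n) :
  regular_pair A B ->
  \rank (row_mx C D) = n ->
  C *m A + D *m B = 0 ->
  regular_pair D C.
Proof.
move=> [l hl] hr hCD.
set E := A - l *: B.
have Eu : E \in unitmx by rewrite unitmxE unitfE.
set D' := D + l *: C.
have hCE : C *m E = - (D' *m B).
  rewrite /E /D' mulmxBr mulmxDl -!scalemxAl -scalemxAr.
  apply/eqP; rewrite -subr_eq0 opprK; apply/eqP.
  by rewrite addrACA addNr addr0 hCD.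
have hC : C = - (D' *m (B *m invmx E)).
  by rewrite mulmxA -mulNmx -hCE -mulmxA mulmxV // mulmx1.
have hD : D = D' *m (1%:M + l *: (B *m invmx E)).
  rewrite mulmxDr mulmx1 -scalemxAr -[D' *m (B *m _)]opprK -hC.
  by rewrite /D' scalerN addrK.
have hrow : row_mx C D = D' *m row_mx (- (B *m invmx E)) (1%:M + l *: (B *m invmx E)).
  by rewrite mul_mx_row mulmxN -hC -hD.
have : (n <= \rank D')%N.
  by rewrite -{1}hr hrow mxrankM_maxl.
move=> hle.
exists (- l).
have : row_free D'.
  by rewrite /row_free eqn_leq rank_leq_row hle.
rewrite row_free_unit unitmxE unitfE /D'.
by rewrite scaleNr opprK.
Qed.
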